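(* In the changepoint model with negative-binomial segment lengths described in the context, for $0<j\le n$ and every integer $i\ge n-j$, $$P(S=i,\,C_n=j\mid Y_{1:n}=y_{1:n})=\frac{\tilde c_{jn}\,\mathrm{NB}(i;q,r)}{\sum_{\ell=n-j}^\infty\mathrm{NB}(\ell;q,r)}.$$
   Context: Let $\mathrm{NB}(\ell;q,r)=\binom{r-1+\ell}{\ell}q^r(1-q)^\ell$ ($\ell=0,1,2,\dots$) be the negative binomial probability mass function with success probability $q\in(0,1)$ and number of successes $r\in\mathbb N_{\ge1}$. Model: fix $n\ge1$ and data $y_1,\dots,y_n$; $(\mathbb X,\mathcal X)$, $(\mathbb Y,\mathcal Y)$ standard Borel, $\psi$ $\sigma$-finite on $\mathbb Y$, $\mathcal J$ a probability measure on $\mathbb X$. Let $q_{0i}\in[0,1]$ ($i\ge1$) be arbitrary and for $0<j<i$ let $q_{ji}=\sum_{\ell\ge i-j}\mathrm{NB}(\ell;q,r)/\sum_{\ell\ge i-j-1}\mathrm{NB}(\ell;q,r)$. The changepoint process $(C_i)_{i\ge1}$, $C_i\in\{0,\dots,i\}$, is a Markov chain with $P(C_1=0)=q_{01}$, $P(C_1=1)=1-q_{01}$, and for $i\ge2$: $P(C_i=j\mid C_{i-1}=j)=q_{ji}$, $P(C_i=i\mid C_{i-1}=j)=1-q_{ji}$; it is defined for all $i\ge1$ (beyond $n$). For $i=1,\dots,n$: $X_1\sim\mathcal J$; for $i\ge2$, $X_i\sim\mathcal J$ (fresh) if $C_i=i$ and $X_i=X_{i-1}$ if $C_i<i$; $Y_i$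 depends on all other variables only through $X_i$ with density $p(Y_i=y\mid X_i=x)$ w.r.t. $\psi$; given $C_n$, the future chain $(C_k)_{k>n}$ is independent of $X_{1:n},Y_{1:n},C_{1:n-1}$. Assume $\int\prod_{\ell=j}^ip(Y_\ell=y_\ell\mid X_\ell=x)\mathcal J(dx)>0$ for $0<j\le i\le n$. Let $\tau=\min\{k>n:C_k=k\}$ and $S=\tau-1-C_n$ (the length, counted as end minus start, of the segment containing $n$). Let $\tilde c_{jn}=P(C_n=j\mid Y_{1:n}=y_{1:n})$. *)

(* Defs.v *)
From HB Require Import structures.
From mathcomp Require Import all_boot all_order all_algebra.
From mathcomp Require Import all_classical all_reals all_analysis.
Set Implicit Arguments. Unset Strict Implicit. Unset Printing Implicit Defensive.
Import Order.TTheory GRing.Theory Num.Theory.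
Local Open Scope ring_scope.

Definition NB {R : realType} (q : R) (r l : nat) : R :=
  ('C(r.-1 + l, l))%:R * q ^+ r * (1 - q) ^+ l.

Definition NBtail {R : realType} (q : R) (r k : nat) : R :=
  limn (fun N => \sum_(k <= l < N) NB q r l).

Definition hazq {R : realType} (q : R) (r : nat) (q0 : nat -> R) (a i : nat) : R :=
  if a == 0%N then q0 i else NBtail q r (i - a) / NBtail q r (i - a).-1.

(* P(C_1 = b) *)
Definition cinit {R : realType} (q0 : nat -> R) (b : nat) : R :=
  if b == 0%N then q0 1%N else if b == 1%N then 1 - q0 1%N else 0.

(* P(C_i = b | C_{i-1} = a), i >= 2 *)
Definition ctrans {R : realType} (q : R) (r : nat) (q0 : nat -> R) (i a b : nat) : R :=
  if b == i then 1 - hazq q r q0 a i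
  else if b == a then hazq q r q0 a i else 0.

(* A trajectory (C_1, ..., C_m) of the changepoint chain up to horizon m;
   entry k : 'I_m stores C_{k+1} (values in 0..m). *)
Definition cpath (m : nat) := {ffun 'I_m -> 'I_m.+1}.

(* C_t for 1 <= t <= m (0 outside this range). *)
Definition cpat {m : nat} (c : cpath m) (t : nat) : nat :=
  if t is t'.+1 then
    (if (insub t' : option 'I_m) is Some k then nat_of_ord (c k) else 0%N)
  else 0%N.

Definition chainprob {R : realType} (q : R) (r : nat) (q0 : nat -> R)
  (m : nat) (c : cpath m) : R :=
  cinit q0 (cpat c 1) * \prod_(2 <= t < m.+1) ctrans q r q0 t (cpat c t.-1) (cpat c t).

Definition seglik {R : realType} {dX} {X : measurableType dX} {Y : Type}
  (J : probability X R) (dens : nat -> X -> Y -> R) (y : nat -> Y) (a b : nat)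
  : \bar R :=
  (\int[J]_x (\prod_(a <= l < b.+1) dens l x (y l))%:E)%E.

Definition nextstart (n : nat) {m : nat} (c : cpath m) (a : nat) : nat :=
  head n.+1 [seq t <- iota a.+1 (n - a) | cpat c t == t].

(* p(Y_{1:n} = y_{1:n} | C_{1:n} = c_{1:n}): X_1 ~ J, fresh X_t ~ J when C_t = t
   (t >= 2), X_t = X_{t-1} otherwise; Y_t | X_t with density dens t. *)
Definition lik {R : realType} {dX} {X : measurableType dX} {Y : Type}
  (J : probability X R) (dens : nat -> X -> Y -> R) (y : nat -> Y)
  (n : nat) {m : nat} (c : cpath m) : R :=
  \prod_(1 <= a < n.+1 | (a == 1%N) || (cpat c a == a))
     fine (seglik J dens y a (nextstart n c a).-1).

(* Joint density of (C_{1:m}, Y_{1:n}) at (c, y_{1:n}), for m >= n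
   (future chain depends on the past only through C_n). *)
Definition joint {R : realType} {dX} {X : measurableType dX} {Y : Type}
  (J : probability X R) (dens : nat -> X -> Y -> R) (y : nat -> Y)
  (q : R) (r : nat) (q0 : nat -> R) (n m : nat) (c : cpath m) : R :=
  chainprob q r q0 c * lik J dens y n c.

Definition post {R : realType} {dX} {X : measurableType dX} {Y : Type}
  (J : probability X R) (dens : nat -> X -> Y -> R) (y : nat -> Y)
  (q : R) (r : nat) (q0 : nat -> R) (n m : nat) (E : pred (cpath m)) : R :=
  (\sum_(c | E c) joint J dens y q r q0 n c) /
  (\sum_(c : cpath m) joint J dens y q r q0 n c).

(* The event {S = i, C_n = j} with tau = min{k > n : C_k = k}, S = tau - 1 - C_n;
   it is decided by C_1, ..., C_{j+i+1}. *)
Definition eventS (n j i : nat) : pred (cpath (j + i).+1) :=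
  fun c => [&& cpat c n == j,
               [forall k : 'I_(j + i).+1,
                  ((n < k.+1)%N && (k.+1 < (j + i).+1)%N) ==> (cpat c k.+1 != k.+1)]
             & cpat c (j + i).+1 == (j + i).+1].
Arguments eventS : clear implicits.

(* Main.v *)
Require Import Defs.
From HB Require Import structures.
From mathcomp Require Import all_boot all_order all_algebra.
From mathcomp Require Import all_classical all_reals all_analysis.
From mathcomp Require Import ring lra zify.
Set Implicit Arguments. Unset Strict Implicit. Unset Printing Implicit Defensive.
Import Order.TTheory GRing.Theory Num.Theory.
Local Open Scope ring_scope.


Lemma geom_bound (R : realType) (x : R) N : (\sum_(l < N) x ^+ l) * (1 - x) = 1 - x ^+ N.
Proof.
elim: N => [|N IH]; first by rewrite big_ord0 expr0 mul0r subrr.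
by rewrite big_ord_recr /= mulrDl IH exprS; ring.
Qed.

Lemma bin_bound (R : realType) (x : R) : 0 <= x < 1 -> forall r N,
  (\sum_(l < N) ('C(r + l, l))%:R * x ^+ l) * (1 - x) ^+ r.+1 <= 1.
Proof.
move=> /andP[x0 x1]; elim=> [|r IH] N.
  under eq_bigr => l _ do rewrite add0n binn mul1r.
  by rewrite expr1 geom_bound lerBlDr lerDl exprn_ge0.
elim: N => [|N IHN]; first by rewrite big_ord0 mul0r.
have E : \sum_(l < N.+1) ('C(r.+1 + l, l))%:R * x ^+ l =
   \sum_(l < N.+1) ('C(r + l, l))%:R * x ^+ l +
   x * \sum_(l < N) ('C(r.+1 + l, l))%:R * x ^+ l.
  rewrite big_ord_recl [X in _ = X + _]big_ord_recl /= !addn0 !bin0 -addrA.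
  idtac.
  rewrite big_distrr /= -big_split /=; congr (_ + _).
  apply: eq_bigr => l _; rewrite /bump /= !add1n.
  rewrite addnS binS natrD mulrDl exprS addSn addnS; congr (_ + _); ring.
rewrite E mulrDl exprS.
have h1 := IH N.+1.
have qx : 0 <= 1 - x by rewrite subr_ge0 ltW.
rewrite -[leRHS](subrK x).
apply: lerD.
  by rewrite mulrCA ler_piMr.
by rewrite -mulrA -exprS ler_piMr.
Qed.

Definition useq (R : realType) (q : R) r k := fun N => \sum_(k <= l < N) NB q r l.

Lemma NB_gt0 (R : realType) (q : R) r l : 0 < q < 1 -> 0 < NB q r l.
Proof.
move=> /andP[q0 q1]; rewrite /NB.
rewrite !mulr_gt0 ?exprn_gt0 ?subr_gt0 // ltr0n bin_gt0 leq_addl //.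
Qed.

Lemma useq_nd (R : realType) (q : R) r k : 0 < q < 1 -> nondecreasing_seq (useq q r k).
Proof.
move=> hq; apply/nondecreasing_seqP => N; rewrite /useq.
case: (leqP k N) => hk.
  by rewrite big_nat_recr //= lerDl ltW // NB_gt0.
rewrite big_geq; last exact: ltnW.
by apply: sumr_ge0 => l _; rewrite ltW // NB_gt0.
Qed.

Lemma useq_ub (R : realType) (q : R) r k : 0 < q < 1 -> (0 < r)%N ->
  forall N, useq q r k N <= 1.
Proof.
move=> hq r0 N; rewrite /useq.
have hx : 0 <= 1 - q < 1.
  by case/andP: hq => q0 q1; rewrite subr_ge0 ltW //= ltrBlDr ltrDl.
have B := bin_bound hx r.-1 N.
have full : \sum_(0 <= l < N) NB q r l <= 1.
  rewrite big_mkord /NB.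
  have -> : \sum_(i < N) ('C(r.-1 + i, i))%:R * q ^+ r * (1 - q) ^+ i =
     (\sum_(i < N) ('C(r.-1 + i, i))%:R * (1 - q) ^+ i) * q ^+ r.
    rewrite big_distrl; apply: eq_bigr => l _ /=; rewrite -mulrA [q ^+ r * _]mulrC mulrA //.
  by move: B; rewrite prednK // (_ : 1 - (1 - q) = q) //; ring.
case: (leqP k N) => hk.
  apply: le_trans full; rewrite [leRHS](@big_cat_nat _ _ _ k) //= lerDr.
  by apply: sumr_ge0 => l _; rewrite ltW // NB_gt0.
by rewrite big_geq ?ler01 // ltnW.
Qed.

Lemma useq_cvg (R : realType) (q : R) r k : 0 < q < 1 -> (0 < r)%N ->
  cvgn (useq q r k).
Proof.
move=> hq r0; apply: nondecreasing_is_cvgn; first exact: useq_nd.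
by exists 1 => _ [N _ <-]; exact: useq_ub.
Qed.

Lemma NBtail_gt0 (R : realType) (q : R) r k : 0 < q < 1 -> (0 < r)%N ->
  0 < NBtail q r k.
Proof.
move=> hq r0; have := nondecreasing_cvgn_le (@useq_nd _ q r k hq) (@useq_cvg _ q r k hq r0) k.+1.
rewrite /useq big_nat1 => h; apply: lt_le_trans h; exact: NB_gt0.
Qed.

Lemma NBtailS (R : realType) (q : R) r k : 0 < q < 1 -> (0 < r)%N ->
  NBtail q r k = NB q r k + NBtail q r k.+1.
Proof.
move=> hq r0.
have C := @useq_cvg _ q r k.+1 hq r0.
have : (useq q r k @ \oo --> NB q r k + NBtail q r k.+1)%classic.
  have H2 : ((fun N => NB q r k + useq q r k.+1 N) @ \oo --> NB q r k + NBtail q r k.+1)%classic.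
    apply: (@cvgD _ _ _ _ _ (fun _ => NB q r k) (useq q r k.+1)); first exact: cvg_cst.
    exact: C.
  apply: cvg_trans H2.
  apply: near_eq_cvg; near=> N.
  rewrite /useq /= [RHS]big_ltn //.
  by near: N; exists k.+1 => // N.
by move/cvg_lim => <-.
Unshelve. all: by end_near. Qed.


Definition upd (s : nat -> nat) (k b : nat) : nat -> nat :=
  fun t => if t == k then b else s t.

Lemma cpatE m (c : cpath m) t (h : (t < m)%N) : cpat c t.+1 = c (Ordinal h).
Proof.
rewrite /cpat; case: insubP => [u _ hu|]; last by rewrite h.
by congr (nat_of_ord (c _)); apply: val_inj.
Qed.

Lemma cpat_big m (c : cpath m) t : (m <= t)%N -> cpat c t.+1 = 0%N.
Proof.
by move=> h; rewrite /cpat; case: insubP => [u hu _|//]; move: hu; rewrite ltnNge h.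
Qed.

Lemma cpat_le m (c : cpath m) t : (cpat c t <= m)%N.
Proof.
case: t => [//|t]; case: (ltnP t m) => h; last by rewrite cpat_big.
by rewrite (cpatE c h) -ltnS.
Qed.

Definition extp m (c : cpath m) (b : 'I_m.+2) : cpath m.+1 :=
  [ffun k : 'I_m.+1 => if unlift ord_max k is Some k' then widen_ord (leqnSn _) (c k') else b].

Definition restr m (c : cpath m.+1) : cpath m :=
  [ffun k : 'I_m => inord (c (widen_ord (leqnSn _) k))].

Lemma cpat_extp m (c : cpath m) b : cpat (extp c b) = upd (cpat c) m.+1 b.
Proof.
apply: funext => t; rewrite /upd; case: t => [//|t].
rewrite eqSS; case: (ltnP t m.+1) => h.
  rewrite (cpatE _ h) ffunE; case: unliftP => [k|] hk.
    have tk : t = k by move: hk => /(congr1 val) /=; rewrite /bump leqNgt ltn_ord.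
    have tm : (t < m)%N by rewrite tk.
    by rewrite (ltn_eqF tm) (cpatE c tm) /=; congr (nat_of_ord (c _)); apply: val_inj.
  by move: hk => /(congr1 val) /= ->; rewrite eqxx.
by rewrite cpat_big // cpat_big ?(ltnW h) // gtn_eqF.
Qed.

Lemma sum_step (R : realType) m (G : (nat -> nat) -> R) :
  (forall s t, (0 < t <= m)%N -> (m < s t)%N -> G s = 0) ->
  \sum_(c : cpath m.+1) G (cpat c) =
  \sum_(c : cpath m) \sum_(b : 'I_m.+2) G (upd (cpat c) m.+1 b).
Proof.
move=> HG.
rewrite pair_big /=.
pose P := fun c : cpath m.+1 => [forall k : 'I_m, (c (widen_ord (leqnSn _) k) <= m)%N].
rewrite (bigID P) /= [X in _ + X]big1 ?addr0; last first.
  move=> c /forallPn [k]; rewrite -ltnNge => hk.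
  apply: (HG _ k.+1); first by rewrite /= ltn_ord.
  have km : (k < m.+1)%N by apply: leqW.
  by rewrite (cpatE c km); move: hk; congr (_ < nat_of_ord (c _))%N; apply: val_inj.
rewrite (reindex_onto (fun p => extp p.1 p.2) (fun c => (restr c, c ord_max))) /=.
  apply: eq_big => [[c b]|[c b] _]; last by rewrite cpat_extp.
  apply/andP; split.
    apply/forallP => k; rewrite ffunE; case: unliftP => [k'|] hk.
      by rewrite /= -ltnS.
    by move: hk => /(congr1 val) /= km; move: (ltn_ord k); rewrite km ltnn.
  apply/eqP => /=; congr (_, _).
    apply/ffunP => k; rewrite !ffunE; apply: val_inj => /=.
    case: unliftP => [k'|] hk.
      rewrite /= inordK; last by rewrite ltnS -ltnS.
      by congr (nat_of_ord (c _)); apply: val_inj; move: hk => /(congr1 val) /=; rewrite /bump leqNgt ltn_ord.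
    by move: hk => /(congr1 val) /= km; move: (ltn_ord k); rewrite km ltnn.
  by rewrite /extp ffunE unlift_none.
move=> c /forallP Pc; apply/ffunP => k; rewrite !ffunE /=.
case: unliftP => [k'|->//] ->; apply: val_inj => /=.
rewrite ffunE inordK ?ltnS ?Pc //; congr (nat_of_ord (c _)); apply: val_inj => /=; rewrite /bump leqNgt ltn_ord //.
Qed.


Definition CP (R : realType) (q : R) r (q0 : nat -> R) m (s : nat -> nat) : R :=
  cinit q0 (s 1%N) * \prod_(2 <= t < m.+1) ctrans q r q0 t (s t.-1) (s t).

Lemma CP_ext (R : realType) (q : R) r q0 m s1 s2 :
  (forall t, (t <= m)%N -> s1 t = s2 t) -> (0 < m)%N -> CP q r q0 m s1 = CP q r q0 m s2.
Proof.
move=> h m0; rewrite /CP (h 1%N m0); congr (_ * _); apply: eq_big_nat => t /andP[t2 tm].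
have ht : (t <= m)%N by rewrite -ltnS.
by rewrite (h t ht) (h t.-1) // (leq_trans (leq_pred _)).
Qed.

Lemma CP_step (R : realType) (q : R) r q0 m s b : (0 < m)%N ->
  CP q r q0 m.+1 (upd s m.+1 b) = CP q r q0 m s * ctrans q r q0 m.+1 (s m) b.
Proof.
move=> m0; rewrite /CP big_nat_recr //= /upd eqxx (ltn_eqF (ltnSn m)).
rewrite (_ : (1 == m.+1) = false); last by rewrite eqSS eq_sym; apply/eqP; move: m0; case: m.
rewrite -mulrA; congr (_ * (_ * _)); apply: eq_big_nat => t /andP[t2 tm].
rewrite (ltn_eqF tm) (_ : (t.-1 == m.+1) = false) //.
by apply: ltn_eqF; rewrite (leq_ltn_trans (leq_pred _)).
Qed.

Lemma cinit_neq0 (R : realType) (q0 : nat -> R) b : cinit q0 b != 0 -> (b <= 1)%N.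
Proof. by rewrite /cinit; case: b => [|[|b]] //=; rewrite eqxx. Qed.

Lemma ctrans_neq0 (R : realType) (q : R) r q0 t a b :
  ctrans q r q0 t a b != 0 -> b = t \/ b = a.
Proof.
rewrite /ctrans; case: (b =P t) => [->|_]; first by left.
by case: (b =P a) => [->|_]; [right | rewrite eqxx].
Qed.

Lemma CP_factors (R : realType) (q : R) r q0 m s : CP q r q0 m s != 0 ->
  cinit q0 (s 1%N) != 0 /\
  forall t, (2 <= t <= m)%N -> ctrans q r q0 t (s t.-1) (s t) != 0.
Proof.
rewrite /CP mulf_eq0 negb_or => /andP[h1 h2]; split => // t ht.
move: h2; rewrite prodf_seq_neq0 => /allP /(_ t); rewrite mem_index_iota ltnS; apply => //.
Qed.

Lemma CP_bound (R : realType) (q : R) r q0 m s : CP q r q0 m s != 0 ->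
  forall t, (0 < t <= m)%N -> (s t <= t)%N.
Proof.
move=> /CP_factors [h1 h2]; elim=> [|t IH]; first by rewrite ltnn.
move=> /andP[_ tm].
case: t IH tm => [_ _|t IH tm]; first exact: (cinit_neq0 h1).
have := h2 t.+2; rewrite tm /= => /(_ isT) /ctrans_neq0 [->//|->].
by rewrite (leq_trans (IH _)) // (leq_trans _ tm).
Qed.


Lemma sum_ind (R : realType) N x (c : R) : (x < N)%N ->
  \sum_(b < N) (((b : nat) == x)%:R * c) = c.
Proof.
move=> hx; rewrite (bigD1 (Ordinal hx)) //= eqxx mul1r big1 ?addr0 // => b hb.
rewrite (_ : ((b : nat) == x) = false) ?mul0r //; apply/negbTE; apply: contra hb.
by move=> /eqP h; apply/eqP/val_inj.
Qed.

Lemma sum_ctrans_f (R : realType) (q : R) r q0 m a (f : nat -> R) : (a <= m)%N ->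
  \sum_(b < m.+2) ctrans q r q0 m.+1 a b * f b =
  (1 - hazq q r q0 a m.+1) * f m.+1 + hazq q r q0 a m.+1 * f a.
Proof.
move=> am.
rewrite (eq_bigr (fun b : 'I_m.+2 => ((b : nat) == m.+1)%:R * ((1 - hazq q r q0 a m.+1) * f m.+1)
   + ((b : nat) == a)%:R * (hazq q r q0 a m.+1 * f a))); last first.
  move=> b _; rewrite /ctrans; case: (_ =P _) => [->|hb].
    by rewrite (_ : (m.+1 == a) = false) ?mul1r ?mul0r ?addr0 // gtn_eqF.
  rewrite mul0r add0r; case: ((b : nat) =P a) => [->|_]; first by rewrite mul1r.
  by rewrite !mul0r.
by rewrite big_split /= !sum_ind // ltnS ltnW.
Qed.

Lemma chain_step (R : realType) (q : R) r q0 m (F : (nat -> nat) -> R) : (0 < m)%N ->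
  \sum_(c : cpath m.+1) CP q r q0 m.+1 (cpat c) * F (cpat c) =
  \sum_(c : cpath m) CP q r q0 m (cpat c) *
     \sum_(b < m.+2) ctrans q r q0 m.+1 (cpat c m) b * F (upd (cpat c) m.+1 b).
Proof.
move=> m0.
rewrite (sum_step (G := fun s => CP q r q0 m.+1 s * F s)); last first.
  move=> s t ht hs; case: (CP q r q0 m.+1 s =P 0) => [->|/eqP hC]; first by rewrite mul0r.
  have := CP_bound hC (t := t); case/andP: ht => t0 tm.
  rewrite t0 (leq_trans tm) //= => /(_ isT) hst.
  by move: (leq_ltn_trans (leq_trans hst tm) hs); rewrite ltnn.
apply: eq_bigr => c _; rewrite big_distrr; apply: eq_bigr => b _.
by rewrite CP_step // -mulrA.
Qed.

Definition Ind n j k (s : nat -> nat) : bool :=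
  (s n == j) && all (fun t => s t != t) (iota n.+1 (k - n)).

Lemma Ind_ext n j k s1 s2 : (forall t, (t <= k)%N -> s1 t = s2 t) -> (n <= k)%N ->
  Ind n j k s1 = Ind n j k s2.
Proof.
move=> h nk; rewrite /Ind h //; congr (_ && _); apply: eq_in_all => t.
rewrite mem_iota => /andP[_ ht]; rewrite h //.
by move: ht; rewrite addSn subnKC // ltnS.
Qed.

Lemma IndS n j k s : (n <= k)%N -> Ind n j k.+1 s = Ind n j k s && (s k.+1 != k.+1).
Proof.
move=> nk; rewrite /Ind subSn // -[(k - n).+1]addn1 iotaD all_cat /= andbT andbA.
by rewrite addSn subnKC.
Qed.

Lemma seg_const (R : realType) (q : R) r q0 n j k s :
  CP q r q0 k s != 0 -> Ind n j k s -> (0 < n)%N -> (n <= k)%N -> s k = j.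
Proof.
move=> /CP_factors [_ h2] /andP[/eqP sn hall] n0 nk.
suff H : forall d, (n + d <= k)%N -> s (n + d)%N = j.
  by have := H (k - n)%N; rewrite subnKC // => ->.
elim=> [|d IH] hd; first by rewrite addn0.
have := h2 (n + d.+1)%N; rewrite hd andbT.
have -> : (2 <= n + d.+1)%N by rewrite addnS ltnS (leq_trans n0) // leq_addr.
move=> /(_ isT) /ctrans_neq0; rewrite addnS /= => [[hE|->]]; last first.
  by apply: IH; rewrite (leq_trans _ hd) // addnS.
move/allP: hall => /(_ (n + d).+1); rewrite mem_iota ltnS leq_addr /= hE eqxx.
rewrite addSn subnKC // ltnS -addnS => /(_ hd); by [].
Qed.


Definition Lext (R : realType) (L : (nat -> nat) -> R) n :=
  forall s1 s2, (forall t, (t <= n)%N -> s1 t = s2 t) -> L s1 = L s2.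

Lemma L_upd (R : realType) (L : (nat -> nat) -> R) n m s b :
  Lext L n -> (n <= m)%N -> L (upd s m.+1 b) = L s.
Proof.
move=> hL nm; apply: hL => t tn; rewrite /upd.
by rewrite (_ : (t == m.+1) = false) // ltn_eqF // ltnS (leq_trans tn).
Qed.

Definition Zsum (R : realType) (q : R) r q0 (L : (nat -> nat) -> R) m :=
  \sum_(c : cpath m) CP q r q0 m (cpat c) * L (cpat c).

Lemma Zstep (R : realType) (q : R) r q0 L n m :
  Lext L n -> (n <= m)%N -> (0 < m)%N -> Zsum q r q0 L m.+1 = Zsum q r q0 L m.
Proof.
move=> hL nm m0; rewrite /Zsum chain_step //; apply: eq_bigr => c _.
rewrite (eq_bigr (fun b : 'I_m.+2 => ctrans q r q0 m.+1 (cpat c m) b * L (cpat c))); last first.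
  by move=> b _; rewrite (L_upd _ _ hL nm).
have := @sum_ctrans_f R q r q0 m (cpat c m) (fun _ => L (cpat c)) (cpat_le c m).
rewrite /= => ->; ring.
Qed.

Lemma Ziter (R : realType) (q : R) r q0 L n d :
  Lext L n -> (0 < n)%N -> Zsum q r q0 L (n + d) = Zsum q r q0 L n.
Proof.
move=> hL n0; elim: d => [|d IH]; first by rewrite addn0.
by rewrite addnS (Zstep _ _ _ hL) // ?leq_addr // (leq_trans n0) // leq_addr.
Qed.

Definition Bsum (R : realType) (q : R) r q0 (L : (nat -> nat) -> R) n j k :=
  \sum_(c : cpath k) CP q r q0 k (cpat c) * (L (cpat c) * (Ind n j k (cpat c))%:R).

Lemma Bgen (R : realType) (q : R) r q0 L n j k (phi : nat -> bool) :
  Lext L n -> (0 < n)%N -> (n <= k)%N ->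
  \sum_(c : cpath k.+1) CP q r q0 k.+1 (cpat c) *
     (L (cpat c) * (Ind n j k (cpat c) && phi (cpat c k.+1))%:R) =
  Bsum q r q0 L n j k * ((1 - hazq q r q0 j k.+1) * (phi k.+1)%:R + hazq q r q0 j k.+1 * (phi j)%:R).
Proof.
move=> hL n0 nk; have k0 : (0 < k)%N by apply: leq_trans nk.
have := @chain_step R q r q0 k (fun s => L s * (Ind n j k s && phi (s k.+1))%:R) k0.
rewrite /= => ->; rewrite /Bsum big_distrl; apply: eq_bigr => c _ /=.
set s := cpat c.
rewrite (eq_bigr (fun b : 'I_k.+2 => ctrans q r q0 k.+1 (s k) b *
    (L s * (Ind n j k s && phi b)%:R))); last first.
  move=> b _ /=; rewrite (L_upd _ _ hL nk) /upd eqxx; congr (_ * (_ * (_ && _)%:R)).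
  apply: Ind_ext => // t tk; rewrite (_ : (t == k.+1) = false) // ltn_eqF // ltnS.
have := @sum_ctrans_f R q r q0 k (s k) (fun b => L s * (Ind n j k s && phi b)%:R) (cpat_le c k).
rewrite /= => ->.
case: (CP q r q0 k s =P 0) => [->|/eqP hC]; first by rewrite !mul0r.
case hI: (Ind n j k s); last by rewrite /= !(mulr0, mul0r, addr0).
rewrite (seg_const hC hI) //=; ring.
Qed.


Lemma Bstep (R : realType) (q : R) r q0 L n j k :
  Lext L n -> (0 < n)%N -> (n <= k)%N -> (j <= k)%N ->
  Bsum q r q0 L n j k.+1 = Bsum q r q0 L n j k * hazq q r q0 j k.+1.
Proof.
move=> hL n0 nk jk.
have -> : Bsum q r q0 L n j k.+1 = \sum_(c : cpath k.+1) CP q r q0 k.+1 (cpat c) *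
     (L (cpat c) * (Ind n j k (cpat c) && (fun b => b != k.+1) (cpat c k.+1))%:R).
  by apply: eq_bigr => c _; rewrite IndS.
rewrite (@Bgen R q r q0 L n j k (fun b => b != k.+1)) //= eqxx (_ : (j != k.+1) = true); last by rewrite ltn_eqF.
by rewrite /=; ring.
Qed.

Lemma Bfinal (R : realType) (q : R) r q0 L n j k :
  Lext L n -> (0 < n)%N -> (n <= k)%N -> (j <= k)%N ->
  \sum_(c : cpath k.+1) CP q r q0 k.+1 (cpat c) *
     (L (cpat c) * (Ind n j k (cpat c) && (cpat c k.+1 == k.+1))%:R) =
  Bsum q r q0 L n j k * (1 - hazq q r q0 j k.+1).
Proof.
move=> hL n0 nk jk.
have := @Bgen R q r q0 L n j k (fun b => b == k.+1) hL n0 nk.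
rewrite /= => ->; rewrite eqxx (_ : (j == k.+1) = false); last by rewrite ltn_eqF.
by rewrite /=; ring.
Qed.

Lemma Biter (R : realType) (q : R) r q0 L n j d :
  Lext L n -> (0 < n)%N -> (j <= n)%N ->
  Bsum q r q0 L n j (n + d) = Bsum q r q0 L n j n * \prod_(n.+1 <= t < (n + d).+1) hazq q r q0 j t.
Proof.
move=> hL n0 jn; elim: d => [|d IH].
  by rewrite addn0 big_geq // mulr1.
rewrite addnS Bstep ?leq_addr // ?(leq_trans jn) ?leq_addr // IH -mulrA; congr (_ * _).
by rewrite [RHS]big_nat_recr //= ltnS leq_addr.
Qed.

Lemma hz_telescope (R : realType) (q : R) r q0 n j d :
  0 < q < 1 -> (0 < r)%N -> (0 < j)%N -> (j <= n)%N ->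
  \prod_(n.+1 <= t < (n + d).+1) hazq q r q0 j t = NBtail q r (n - j + d) / NBtail q r (n - j).
Proof.
move=> hq r0 j0 jn; elim: d => [|d IH].
  by rewrite !addn0 big_geq // divff // gt_eqF // NBtail_gt0.
rewrite addnS big_nat_recr /=; last by rewrite ltnS leq_addr.
rewrite IH /hazq (_ : (j == 0%N) = false); last by rewrite gtn_eqF.
rewrite (_ : ((n + d).+1 - j)%N = (n - j + d).+1); last by lia.
rewrite /= addnS.
have h1 := NBtail_gt0 (n - j + d) hq r0.
have h2 := NBtail_gt0 (n - j) hq r0.
field; by rewrite ?gt_eqF.
Qed.


Definition Lik {R : realType} {dX} {X : measurableType dX} {Y : Type}
  (J : probability X R) (dens : nat -> X -> Y -> R) (y : nat -> Y)
  (n : nat) (s : nat -> nat) : R :=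
  \prod_(1 <= a < n.+1 | (a == 1%N) || (s a == a))
     fine (seglik J dens y a (head n.+1 [seq t <- iota a.+1 (n - a) | s t == t]).-1).

Lemma likE {R : realType} {dX} {X : measurableType dX} {Y : Type}
  (J : probability X R) (dens : nat -> X -> Y -> R) (y : nat -> Y) n m (c : cpath m) :
  lik J dens y n c = Lik J dens y n (cpat c).
Proof. by []. Qed.

Lemma Lik_ext {R : realType} {dX} {X : measurableType dX} {Y : Type}
  (J : probability X R) (dens : nat -> X -> Y -> R) (y : nat -> Y) n :
  Lext (Lik J dens y n) n.
Proof.
move=> s1 s2 h; rewrite /Lik big_nat_cond [RHS]big_nat_cond.
apply: eq_big => [a|a /andP[/andP[a1 an] _]].
  case ha: (1 <= a < n.+1)%N => //=; case/andP: ha => _ an.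
  by rewrite h.
congr (fine (seglik _ _ _ _ (head _ _).-1)); apply: eq_in_filter => t.
rewrite mem_iota => /andP[_ ht]; rewrite h //.
by move: ht; rewrite addSn subnKC // ltnS.
Qed.

Lemma eventSE n j i (c : cpath (j + i).+1) : (n <= j + i)%N ->
  eventS n j i c = Ind n j (j + i) (cpat c) && (cpat c (j + i).+1 == (j + i).+1).
Proof.
move=> nji; rewrite /eventS /Ind andbA; congr (_ && _); congr (_ && _).
apply/idP/idP.
  move=> /forallP H; apply/allP => t; rewrite mem_iota => /andP[h1 h2].
  case: t h1 h2 => [//|t] h1 h2.
  have tm : (t < (j + i).+1)%N by lia.
  have := H (Ordinal tm); rewrite /= h1 /=.
  have -> : (t.+1 < (j + i).+1)%N by lia.
  by move/implyP; apply.
move=> /allP H; apply/forallP => k; apply/implyP => /andP[h1 h2].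
by apply: H; rewrite mem_iota h1 /=; lia.
Qed.

Unset Implicit Arguments.

Theorem mainTheorem14 (R : realType)
  (dX : measure_display) (X : measurableType dX)
  (dY : measure_display) (Y : measurableType dY)
  (psi : {measure set Y -> \bar R}) (J : probability X R)
  (dens : nat -> X -> Y -> R) (q : R) (r : nat) (q0 : nat -> R)
  (n : nat) (y : nat -> Y) :
  sigma_finite setT psi ->
  (forall l x z, 0 <= dens l x z) ->
  (forall l z, measurable_fun setT (fun x => dens l x z)) ->
  (forall l x, measurable_fun setT (dens l x)) ->
  (forall l x, (\int[psi]_z (dens l x z)%:E = 1)%E) ->
  0 < q < 1 -> (0 < r)%N -> (forall i, 0 <= q0 i <= 1) -> (0 < n)%N ->
  (forall a b, (0 < a)%N -> (a <= b)%N -> (b <= n)%N ->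
     (0 < seglik J dens y a b < +oo)%E) ->
  forall j i : nat, (0 < j <= n)%N -> (n - j <= i)%N ->
  post J dens y q r q0 n (eventS n j i) =
  post J dens y q r q0 n (fun c : cpath n => cpat c n == j) * NB q r i
    / NBtail q r (n - j).
Proof.
move=> _ _ _ _ _ hq r0 _ n0 _ j i /andP[j0 jn] hi.
have nji : (n <= j + i)%N by lia.
pose L := Lik J dens y n.
have hL : Lext L n := @Lik_ext R dX X Y J dens y n.
rewrite /post.
have Num1 : \sum_(c : cpath (j + i).+1 | eventS n j i c) joint J dens y q r q0 n c =
    Bsum q r q0 L n j (j + i) * (1 - hazq q r q0 j (j + i).+1).
  rewrite -Bfinal //; last by lia.
  rewrite big_mkcond; apply: eq_bigr => c _; rewrite eventSE //.
  have -> : joint J dens y q r q0 n c = CP q r q0 (j + i).+1 (cpat c) * L (cpat c) by [].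
  by case: (_ && _); rewrite /= ?mulr1 ?mulr0.
have Den1 : \sum_(c : cpath (j + i).+1) joint J dens y q r q0 n c =
    Zsum q r q0 L (j + i).+1 by [].
have Num2 : \sum_(c : cpath n | cpat c n == j) joint J dens y q r q0 n c =
    Bsum q r q0 L n j n.
  rewrite big_mkcond; apply: eq_bigr => c _; rewrite /Ind subnn /= andbT.
  have -> : joint J dens y q r q0 n c = CP q r q0 n (cpat c) * L (cpat c) by [].
  by case: (_ == _); rewrite /= ?mulr1 ?mulr0.
have Den2 : \sum_(c : cpath n) joint J dens y q r q0 n c = Zsum q r q0 L n by [].
rewrite Num1 Den1 Num2 Den2.
have -> : Zsum q r q0 L (j + i).+1 = Zsum q r q0 L n.
  by rewrite -(Ziter q r q0 ((j + i).+1 - n) hL n0); congr Zsum; lia.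
have -> : Bsum q r q0 L n j (j + i) = Bsum q r q0 L n j n *
     (NBtail q r i / NBtail q r (n - j)).
  have E1 : (j + i = n + (j + i - n))%N by lia.
  rewrite [in LHS]E1 Biter // (@hz_telescope R q r q0 n j (j + i - n) hq r0 j0 jn); congr (_ * (NBtail q r _ / _)); lia.
have -> : hazq q r q0 j (j + i).+1 = NBtail q r i.+1 / NBtail q r i.
  rewrite /hazq (_ : (j == 0%N) = false); last by rewrite gtn_eqF.
  by rewrite (_ : ((j + i).+1 - j)%N = i.+1) //; lia.
have key : NBtail q r i / NBtail q r (n - j) * (1 - NBtail q r i.+1 / NBtail q r i) =
    NB q r i / NBtail q r (n - j).
  have h1 := NBtail_gt0 i hq r0.
  have h2 := NBtail_gt0 (n - j) hq r0.
  have E : NBtail q r i = NB q r i + NBtail q r i.+1 by apply: NBtailS.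
  move: h1; rewrite E => h1.
  field; by rewrite ?gt_eqF.
rewrite -[Bsum _ _ _ _ _ _ _ * _ * _]mulrA key.
by rewrite mulrAC mulrA.
Qed.
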